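(* Let $\sigma(x)=\sum_{k=0}^\infty\sigma_kL_k(x)$ on $I=(-1,1)$, and for $m,n\ge2$ let $a^{(0)}_{m,n}:=\int_{-1}^1\sigma(x)\,\eta_m(x)\,\eta_n(x)\,dx$. If there exist $\eta>0$ and a constant $C_\eta>0$ depending only on $\eta$ such that $|\sigma_k|\le C_\eta e^{-\eta k}$ for all $k\ge0$, then $$|a^{(0)}_{m,n}|\le Ce^{-\eta|n-m|}\qquad\forall\, n,m\ge2,$$ where $C$ is a constant depending only on $\eta$.
   Context: $I=(-1,1)$. $L_k$ denotes the Legendre polynomial of degree $k$ normalized by $L_k(1)=1$. The Babuška–Shen basis is $\eta_k(x)=\frac{1}{\sqrt{4k-2}}(L_{k-2}(x)-L_k(x))$, $k\ge2$. *)

(* Defs.v *)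
From Stdlib Require Import Reals.
From Coquelicot Require Import Coquelicot.
Open Scope R_scope.

(* Legendre pair (L_k x, L_{k+1} x) via Bonnet's recurrence
   (k+2) L_{k+2} = (2k+3) x L_{k+1} - (k+1) L_k, with L_0 = 1, L_1 = x;
   this is the standard normalization L_k(1) = 1. *)
Fixpoint legendre_pair (k : nat) (x : R) : R * R :=
  match k with
  | O => (1, x)
  | S k' => let (a, b) := legendre_pair k' x in
            (b, ((2 * INR k' + 3) * x * b - (INR k' + 1) * a) / (INR k' + 2))
  end.

Definition legendre (k : nat) (x : R) : R := fst (legendre_pair k x).

Definition bs_eta (k : nat) (x : R) : R :=
  (legendre (k - 2) x - legendre k x) / sqrt (4 * INR k - 2).

Definition legendre_series (s : nat -> R) (x : R) : R :=
  Series (fun k => s k * legendre k x).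

Definition a0 (s : nat -> R) (m n : nat) : R :=
  RInt (fun x => legendre_series s x * bs_eta m x * bs_eta n x) (-1) 1.

(* Main.v *)
Require Import Defs.
From Stdlib Require Import Reals Lra Lia.
From Coquelicot Require Import Coquelicot.
Open Scope R_scope.


Notation L := legendre.

Lemma L0 x : L 0 x = 1. Proof. reflexivity. Qed.
Lemma L1 x : L 1 x = x. Proof. reflexivity. Qed.

Lemma pair_eq k x : legendre_pair k x = (L k x, L (S k) x).
Proof. unfold legendre; simpl. destruct (legendre_pair k x); reflexivity. Qed.

Lemma Lrec k x : L (S (S k)) x =
  ((2 * INR k + 3) * x * L (S k) x - (INR k + 1) * L k x) / (INR k + 2).
Proof.
  unfold legendre at 1. simpl. rewrite (pair_eq k x). reflexivity.
Qed.

Lemma INRpos k : 0 <= INR k. Proof. apply pos_INR. Qed.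

Fixpoint dL (k : nat) (x : R) : R :=
  match k with O => 0 | S k' => x * dL k' x + (INR k' + 1) * L k' x end.

Lemma dLb k x : x * dL (S k) x - dL k x = (INR k + 1) * L (S k) x.
Proof.
  induction k.
  - simpl. rewrite L0, L1. ring.
  - change (dL (S (S k)) x) with (x * dL (S k) x + (INR (S k) + 1) * L (S k) x).
    change (dL (S k) x) with (x * dL k x + (INR k + 1) * L k x) at 2.
    rewrite Lrec. rewrite S_INR.
    assert (H := INRpos k).
    set (D := dL k x) in *. set (D1 := dL (S k) x) in *.
    assert (E2 : x * (x * D1 - D) = x * ((INR k + 1) * L (S k) x)) by (rewrite IHk; ring).
    match goal with |- _ = ?c * (?A / ?d) => replace (c * (A / d)) with A by (field; lra) end.
    lra.
Qed.

Lemma dL_S k x : dL (S k) x = x * dL k x + (INR k + 1) * L k x.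
Proof. reflexivity. Qed.

Lemma der_ext (f g : R -> R) (x l lp : R) : (forall t, f t = g t) -> l = lp -> is_derive f x l -> is_derive g x lp.
Proof. intros H E D. subst lp. exact (is_derive_ext f g x l H D). Qed.

Lemma mE (a b : R) : minus a b = a - b. Proof. reflexivity. Qed.
Lemma pE (a b : R) : plus a b = a + b. Proof. reflexivity. Qed.
Lemma sE (a b : R) : scal a b = a * b. Proof. reflexivity. Qed.

Lemma Lder_all k : (forall x, is_derive (L k) x (dL k x)) /\ (forall x, is_derive (L (S k)) x (dL (S k) x)).
Proof.
  induction k.
  - split; intro x.
    + simpl. apply (is_derive_ext (fun _ => 1)). intro; reflexivity. exact (is_derive_const (K:=R_AbsRing) (V:=R_NormedModule) 1 x).
    + simpl. apply (is_derive_ext (fun t => t)). intro; reflexivity.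
      replace (x * 0 + (0 + 1) * L 0 x) with (@one R_AbsRing) by (rewrite L0; simpl; unfold one; simpl; ring).
      apply is_derive_id.
  - destruct IHk as [H0 H1]. split; [exact H1|]. intro x.
    assert (Hk := INRpos k).
    assert (D := is_derive_plus _ _ x _ _
      (is_derive_scal _ x ((2 * INR k + 3) / (INR k + 2)) _
         (is_derive_mult (fun t => t) (L (S k)) x _ _ (is_derive_id x) (H1 x) Rmult_comm))
      (is_derive_scal _ x (- (INR k + 1) / (INR k + 2)) _ (H0 x))).
    simpl in D. unfold plus, mult, one in D; simpl in D.
    refine (der_ext _ _ x _ _ _ _ D).
    + intro t. rewrite Lrec. field. lra.
    + assert (B := dLb k x).
      rewrite (dL_S (S k)). rewrite S_INR.
      assert (B2 : (INR k + 1) * (x * dL (S k) x - dL k x) = (INR k + 1) * ((INR k + 1) * L (S k) x)) by (rewrite B; ring).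
      rewrite !dL_S. rewrite dL_S in B2.
      set (D0 := dL k x) in *. set (L0' := L k x) in *. set (L1' := L (S k) x) in *.
      replace ((2 * INR k + 3) / (INR k + 2) * (1 * L1' + x * (x * D0 + (INR k + 1) * L0')) +
        - (INR k + 1) / (INR k + 2) * D0) with
        (((2 * INR k + 3) * (L1' + x * (x * D0 + (INR k + 1) * L0')) - (INR k + 1) * D0) / (INR k + 2)) by (field; lra).
      apply (Rmult_eq_reg_r (INR k + 2)); [|lra].
      unfold Rdiv. rewrite Rmult_assoc, Rinv_l by lra. rewrite Rmult_1_r.
      lra.
Qed.

Lemma Lder k x : is_derive (L k) x (dL k x).
Proof. apply Lder_all. Qed.

Lemma Lcont k x : continuous (L k) x.
Proof. apply (ex_derive_continuous (K:=R_AbsRing) (V:=R_NormedModule)). exists (dL k x). apply Lder. Qed.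

Lemma dLa k x : dL (S (S k)) x - dL k x = (2 * INR k + 3) * L (S k) x.
Proof.
  rewrite (dL_S (S k)). assert (B := dLb k x). rewrite S_INR. lra.
Qed.

Lemma Lend k : L k 1 = 1 /\ L k (-1) = (-1) ^ k.
Proof.
  assert (H : forall k, (L k 1 = 1 /\ L k (-1) = (-1) ^ k) /\ (L (S k) 1 = 1 /\ L (S k) (-1) = (-1) ^ (S k))).
  { induction k0.
    - rewrite !L0, !L1. simpl. split; split; ring.
    - destruct IHk0 as [[A B] [C D]]. split; [split; assumption|].
      assert (Hk := INRpos k0).
      rewrite !Lrec, A, B, C, D. simpl. split; field; lra. }
  apply H.
Qed.

Lemma intL k : is_RInt (L (S k)) (-1) 1 0.
Proof.
  assert (Hk := INRpos k).
  set (F := fun x => (L (S (S k)) x - L k x) / (2 * INR k + 3)).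
  assert (H : is_RInt (L (S k)) (-1) 1 (minus (F 1) (F (-1)))).
  { apply (is_RInt_derive (V:=R_CompleteNormedModule)).
    - intros x _. 
      assert (D := is_derive_scal _ x (/ (2 * INR k + 3)) _ (is_derive_minus _ _ x _ _ (Lder (S (S k)) x) (Lder k x))).
      refine (der_ext _ _ x _ _ _ _ D).
      + intro t. unfold F, minus, plus, opp; simpl. field. lra.
      + rewrite mE, (dLa k x). field. lra.
    - intros x _. apply Lcont. }
  replace (minus (F 1) (F (-1))) with 0 in H; [exact H|].
  unfold F, minus, plus, opp; simpl.
  destruct (Lend k) as [A B]. destruct (Lend (S (S k))) as [C D].
  rewrite A, B, C, D. simpl. field. lra.
Qed.

Lemma I2 k x : (1 - x ^ 2) * dL k x = (INR k + 1) * (x * L k x - L (S k) x).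
Proof.
  assert (B := dLb k x). rewrite dL_S in B.
  lra.
Qed.

Lemma rot k x : L (S k) x ^ 2 + (1 - x^2) * (dL (S k) x / (INR k + 1)) ^ 2
  = L k x ^ 2 + (1 - x^2) * (dL k x / (INR k + 1)) ^ 2.
Proof.
  assert (Hk := INRpos k).
  assert (E : L (S k) x = x * L k x - (1 - x^2) * dL k x / (INR k + 1)).
  { rewrite I2. field. lra. }
  rewrite E, dL_S. field. lra.
Qed.

Lemma Lbound_sq k x : -1 <= x <= 1 -> L (S k) x ^ 2 + (1 - x^2) * (dL (S k) x / INR (S k)) ^ 2 <= 1.
Proof.
  intro Hx. assert (Hs : 0 <= 1 - x^2) by nra.
  induction k.
  - simpl. rewrite L0. replace (INR 1) with 1 by reflexivity. rewrite L1. field_simplify; lra.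
  - rewrite (S_INR (S k)). rewrite rot.
    eapply Rle_trans; [|exact IHk].
    apply Rplus_le_compat_l. apply Rmult_le_compat_l; [exact Hs|].
    assert (Hk := INRpos k). rewrite S_INR.
    unfold Rdiv. rewrite !Rpow_mult_distr.
    apply Rmult_le_compat_l; [apply pow2_ge_0|].
    apply pow_incr. split.
    + left; apply Rinv_0_lt_compat; lra.
    + apply Rinv_le_contravar; lra.
Qed.

Lemma Lbound k x : -1 <= x <= 1 -> Rabs (L k x) <= 1.
Proof.
  intro Hx. destruct k.
  - rewrite L0, Rabs_R1; lra.
  - assert (H := Lbound_sq k x Hx).
    assert (Hs : 0 <= (1 - x^2) * (dL (S k) x / INR (S k)) ^ 2) by (apply Rmult_le_pos; [nra|apply pow2_ge_0]).
    assert (H2 : L (S k) x ^ 2 <= 1 ^ 2) by lra.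
    rewrite <- (Rabs_R1). apply Rsqr_le_abs_0. unfold Rsqr. simpl in H2. lra.
Qed.


Definition ZI (F : R -> R) := is_RInt F (-1) 1 0.

Lemma ZI_ext F G : (forall x, F x = G x) -> ZI G -> ZI F.
Proof. intros H HG. unfold ZI. apply (is_RInt_ext G). intros; symmetry; apply H. exact HG. Qed.

Lemma RIval (f : R -> R) a b (l lp : R) : is_RInt f a b l -> l = lp -> is_RInt f a b lp.
Proof. intros H E; subst; exact H. Qed.

Lemma ZI_lin f g c d : ZI f -> ZI g -> ZI (fun x => c * f x + d * g x).
Proof.
  intros Hf Hg. unfold ZI.
  assert (H := is_RInt_plus (V:=R_NormedModule) _ _ _ _ _ _ (is_RInt_scal (V:=R_NormedModule) _ _ _ c _ Hf) (is_RInt_scal (V:=R_NormedModule) _ _ _ d _ Hg)).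
  apply (RIval _ _ _ _ _ H). change (c * 0 + d * 0 = 0 :> R). ring.
Qed.

Lemma xL a x : x * L (S a) x = ((INR a + 2) * L (S (S a)) x + (INR a + 1) * L a x) / (2 * INR a + 3).
Proof. assert (H := INRpos a). rewrite Lrec. field. lra. Qed.

Lemma O2 : forall b a, (b < a)%nat -> ZI (fun x => L a x * L b x).
Proof.
  assert (P0 : forall a, (0 < a)%nat -> ZI (fun x => L a x * L 0 x)).
  { intros a Ha. destruct a; [lia|]. apply (ZI_ext _ (L (S a))).
    intro; rewrite L0; ring. apply intL. }
  assert (P1' : forall a, (1 < a)%nat -> ZI (fun x => L a x * L 1 x)).
  { intros a Ha. destruct a as [|a']; [lia|].
    assert (Ha' := INRpos a').
    apply (ZI_ext _ (fun x => ((INR a' + 2) / (2 * INR a' + 3)) * (L (S (S a')) x * L 0 x)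
                           + ((INR a' + 1) / (2 * INR a' + 3)) * (L a' x * L 0 x))).
    { intro x. rewrite L1, L0, Rmult_comm, xL. field. lra. }
    apply ZI_lin; apply P0; lia. }
  assert (H : forall b, (forall a, (b < a)%nat -> ZI (fun x => L a x * L b x)) /\
                        (forall a, (S b < a)%nat -> ZI (fun x => L a x * L (S b) x))).
  { induction b.
    - split; [exact P0 | exact P1'].
    - destruct IHb as [IH0 IH1]. split; [exact IH1|].
      intros a Ha. destruct a as [|a']; [lia|].
      assert (Ha' := INRpos a'). assert (Hb := INRpos b).
      apply (ZI_ext _ (fun x => ((2 * INR b + 3) / (INR b + 2)) *
          (((INR a' + 2) / (2 * INR a' + 3)) * (L (S (S a')) x * L (S b) x)
           + ((INR a' + 1) / (2 * INR a' + 3)) * (L a' x * L (S b) x))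
          + (- (INR b + 1) / (INR b + 2)) * (L (S a') x * L b x))).
      { intro x. rewrite (Lrec b x).
        replace (L (S a') x * (((2 * INR b + 3) * x * L (S b) x - (INR b + 1) * L b x) / (INR b + 2)))
          with (((2 * INR b + 3) * (x * L (S a') x) * L (S b) x - (INR b + 1) * L (S a') x * L b x) / (INR b + 2))
          by (field; lra).
        rewrite xL. field. lra. }
      apply ZI_lin; [apply ZI_lin|]; [apply IH1; lia | apply IH1; lia | apply IH0; lia]. }
  intros b. apply H.
Qed.

Lemma O3 : forall k b a, (k + b < a)%nat -> ZI (fun x => L a x * L k x * L b x).
Proof.
  assert (P0 : forall b a, (0 + b < a)%nat -> ZI (fun x => L a x * L 0 x * L b x)).
  { intros b a Ha. apply (ZI_ext _ (fun x => L a x * L b x)).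
    intro; rewrite L0; ring. apply O2; lia. }
  assert (P1' : forall b a, (1 + b < a)%nat -> ZI (fun x => L a x * L 1 x * L b x)).
  { intros b a Ha. destruct a as [|a']; [lia|].
    assert (Ha' := INRpos a').
    apply (ZI_ext _ (fun x => ((INR a' + 2) / (2 * INR a' + 3)) * (L (S (S a')) x * L b x)
                           + ((INR a' + 1) / (2 * INR a' + 3)) * (L a' x * L b x))).
    { intro x. rewrite L1. rewrite (Rmult_comm (L (S a') x) x), xL. field. lra. }
    apply ZI_lin; apply O2; lia. }
  assert (H : forall k, (forall b a, (k + b < a)%nat -> ZI (fun x => L a x * L k x * L b x)) /\
                        (forall b a, (S k + b < a)%nat -> ZI (fun x => L a x * L (S k) x * L b x))).
  { induction k.
    - split; [exact P0 | exact P1'].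
    - destruct IHk as [IH0 IH1]. split; [exact IH1|].
      intros b a Ha. destruct a as [|a']; [lia|].
      assert (Ha' := INRpos a'). assert (Hk := INRpos k).
      apply (ZI_ext _ (fun x => ((2 * INR k + 3) / (INR k + 2)) *
          (((INR a' + 2) / (2 * INR a' + 3)) * (L (S (S a')) x * L (S k) x * L b x)
           + ((INR a' + 1) / (2 * INR a' + 3)) * (L a' x * L (S k) x * L b x))
          + (- (INR k + 1) / (INR k + 2)) * (L (S a') x * L k x * L b x))).
      { intro x. rewrite (Lrec k x).
        replace (L (S a') x * (((2 * INR k + 3) * x * L (S k) x - (INR k + 1) * L k x) / (INR k + 2)) * L b x)
          with (((2 * INR k + 3) * (x * L (S a') x) * L (S k) x * L b x - (INR k + 1) * L (S a') x * L k x * L b x) / (INR k + 2))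
          by (field; lra).
        rewrite xL. field. lra. }
      apply ZI_lin; [apply ZI_lin|]; [apply IH1; lia | apply IH1; lia | apply IH0; lia]. }
  intros k. apply H.
Qed.


Lemma ZI_scal f c : ZI f -> ZI (fun x => c * f x).
Proof.
  intro H. apply (ZI_ext _ (fun x => c * f x + 0 * f x)). intro; ring. apply ZI_lin; exact H.
Qed.

Lemma cont_mult (f g : R -> R) x : continuous f x -> continuous g x -> continuous (fun y => f y * g y) x.
Proof. intros. exact (continuous_mult (U:=R_UniformSpace) (K:=R_AbsRing) f g x H H0). Qed.

Lemma cont_minus (f g : R -> R) x : continuous f x -> continuous g x -> continuous (fun y => f y - g y) x.
Proof. intros. exact (continuous_minus (U:=R_UniformSpace) (K:=R_AbsRing) (V:=R_NormedModule) f g x H H0). Qed.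

Lemma cont_const (c x : R) : continuous (fun _ => c) x.
Proof. exact (continuous_const (U:=R_UniformSpace) (V:=R_UniformSpace) c x). Qed.

Lemma eta_eq m x : (2 <= m)%nat ->
  bs_eta m x = (L (m - 2) x - L m x) * / sqrt (4 * INR m - 2).
Proof. intros; reflexivity. Qed.

Lemma eta_cont m x : continuous (bs_eta m) x.
Proof.
  unfold bs_eta. apply cont_mult. apply cont_minus; apply Lcont. apply cont_const.
Qed.

Lemma eta_bound m x : (2 <= m)%nat -> -1 <= x <= 1 -> Rabs (bs_eta m x) <= 1.
Proof.
  intros Hm Hx. unfold bs_eta.
  assert (Hm' : 2 <= INR m) by (replace 2 with (INR 2) by reflexivity; apply le_INR; exact Hm).
  assert (Hs : 2 <= sqrt (4 * INR m - 2)).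
  { replace 2 with (sqrt (2*2)) at 1 by (apply sqrt_square; lra). apply sqrt_le_1; lra. }
  unfold Rdiv. rewrite Rabs_mult, Rabs_inv, (Rabs_right (sqrt _)) by lra.
  assert (A := Lbound (m - 2) x Hx). assert (B := Lbound m x Hx).
  assert (C : Rabs (L (m - 2) x - L m x) <= 2).
  { unfold Rminus. eapply Rle_trans; [apply Rabs_triang|]. rewrite Rabs_Ropp. lra. }
  apply (Rmult_le_reg_r (sqrt (4 * INR m - 2))); [lra|].
  rewrite Rmult_assoc, Rinv_l by lra. lra.
Qed.

Definition E m n x := bs_eta m x * bs_eta n x.

Lemma ck_zero k m n : (2 <= m)%nat -> (2 <= n)%nat ->
  ((k + m + 2 < n)%nat \/ (k + n + 2 < m)%nat) ->
  ZI (fun x => L k x * E m n x).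
Proof.
  intros Hm Hn H. unfold E, bs_eta.
  set (sm := sqrt (4 * INR m - 2)). set (sn := sqrt (4 * INR n - 2)).
  destruct H as [H|H].
  - apply (ZI_ext _ (fun x => (/ sm * / sn) * (1 * (1 * (L (n-2) x * L k x * L (m-2) x) + (-1) * (L (n-2) x * L k x * L m x))
       + (-1) * (1 * (L n x * L k x * L (m-2) x) + (-1) * (L n x * L k x * L m x))))).
    { intro x. unfold Rdiv. ring. }
    apply ZI_scal. apply ZI_lin; apply ZI_lin; apply O3; lia.
  - apply (ZI_ext _ (fun x => (/ sm * / sn) * (1 * (1 * (L (m-2) x * L k x * L (n-2) x) + (-1) * (L (m-2) x * L k x * L n x))
       + (-1) * (1 * (L m x * L k x * L (n-2) x) + (-1) * (L m x * L k x * L n x))))).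
    { intro x. unfold Rdiv. ring. }
    apply ZI_scal. apply ZI_lin; apply ZI_lin; apply O3; lia.
Qed.

Lemma integrand_cont k m n x : continuous (fun y => L k y * E m n y) x.
Proof. apply cont_mult. apply Lcont. unfold E. apply cont_mult; apply eta_cont. Qed.

Lemma ck_ex k m n : ex_RInt (fun y => L k y * E m n y) (-1) 1.
Proof. apply (ex_RInt_continuous (V:=R_CompleteNormedModule)). intros; apply integrand_cont. Qed.

Lemma ck_bound k m n : (2 <= m)%nat -> (2 <= n)%nat ->
  Rabs (RInt (fun y => L k y * E m n y) (-1) 1) <= 2.
Proof.
  intros Hm Hn.
  eapply Rle_trans; [apply (abs_RInt_le_const _ _ _ 1); [lra| apply ck_ex |]|].
  - intros t Ht. unfold E. rewrite !Rabs_mult.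
    assert (A := Lbound k t Ht). assert (B := eta_bound m t Hm Ht). assert (C := eta_bound n t Hn Ht).
    assert (0 <= Rabs (L k t)) by apply Rabs_pos.
    assert (0 <= Rabs (bs_eta m t)) by apply Rabs_pos.
    assert (0 <= Rabs (bs_eta n t)) by apply Rabs_pos.
    assert (Rabs (bs_eta m t) * Rabs (bs_eta n t) <= 1) by nra. nra.
  - lra.
Qed.


Lemma exp_pow eta k : exp (- eta * INR k) = exp (- eta) ^ k.
Proof.
  induction k.
  - simpl. rewrite Rmult_0_r, exp_0. reflexivity.
  - rewrite S_INR, Rmult_plus_distr_l, Rmult_1_r, exp_plus, IHk. simpl. ring.
Qed.

Lemma sumS (a : nat -> R) n : sum_n a (S n) = sum_n a n + a (S n).
Proof. exact (sum_Sn a n). Qed.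
Lemma sum0 (a : nat -> R) : sum_n a 0 = a 0%nat.
Proof. exact (sum_O a). Qed.

Lemma partial_diff (a : nat -> R) A q N p : 0 <= q < 1 ->
  (forall k, Rabs (a k) <= A * q ^ k) ->
  Rabs (sum_n a (N + p) - sum_n a N) <= A * (q ^ (S N) - q ^ (S (N + p))) / (1 - q).
Proof.
  intros Hq Ha. induction p.
  - rewrite Nat.add_0_r. replace (sum_n a N - sum_n a N) with 0 by ring.
    rewrite Rabs_R0. unfold Rdiv. rewrite Rminus_diag, Rmult_0_r, Rmult_0_l. lra.
  - rewrite Nat.add_succ_r, sumS.
    replace (sum_n a (N + p) + a (S (N + p)) - sum_n a N) with ((sum_n a (N + p) - sum_n a N) + a (S (N + p))) by ring.
    eapply Rle_trans; [apply Rabs_triang|].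
    eapply Rle_trans; [apply Rplus_le_compat; [exact IHp | apply Ha]|].
    right. simpl. field. lra.
Qed.

Lemma sum_zero_tail (a : nat -> R) A q K : 0 <= q < 1 -> 0 <= A ->
  (forall k, Rabs (a k) <= A * q ^ k) -> (forall k, (k < K)%nat -> a k = 0) ->
  forall N, Rabs (sum_n a N) <= A * q ^ K / (1 - q).
Proof.
  intros Hq HA Ha Hz.
  assert (H : forall N, Rabs (sum_n a N) <= A * (q ^ K - q ^ (Nat.max K (S N))) / (1 - q)).
  { induction N.
    - rewrite sum0. destruct K.
      + simpl. eapply Rle_trans; [apply Ha|]. right; simpl. field. lra.
      + rewrite Hz by lia. rewrite Rabs_R0. rewrite Nat.max_l by lia.
        rewrite Rminus_diag. right. unfold Rdiv. ring.
    - rewrite sumS. eapply Rle_trans; [apply Rabs_triang|].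
      destruct (Nat.lt_ge_cases (S N) K) as [Hl|Hl].
      + rewrite Hz by lia. rewrite Rabs_R0, Rplus_0_r.
        rewrite (Nat.max_l K (S (S N))) by lia. rewrite (Nat.max_l K (S N)) in IHN by lia. exact IHN.
      + rewrite (Nat.max_r K (S (S N))) by lia. rewrite (Nat.max_r K (S N)) in IHN by lia.
        eapply Rle_trans; [apply Rplus_le_compat; [exact IHN | apply Ha]|].
        right. simpl. field. lra. }
  intro N. eapply Rle_trans; [apply H|].
  unfold Rdiv. apply Rmult_le_compat_r. left; apply Rinv_0_lt_compat; lra.
  apply Rmult_le_compat_l; [exact HA|]. assert (0 <= q ^ Nat.max K (S N)) by (apply pow_le; lra). lra.
Qed.

Lemma series_tail (a : nat -> R) A q N : 0 <= q < 1 -> 0 <= A ->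
  (forall k, Rabs (a k) <= A * q ^ k) ->
  Rabs (Series a - sum_n a N) <= A * q ^ (S N) / (1 - q).
Proof.
  intros Hq HA Ha.
  assert (Ex : ex_series a).
  { apply (ex_series_le (K:=R_AbsRing) (V:=R_CompleteNormedModule) a (fun n => A * q ^ n)).
    - intro n. exact (Ha n).
    - apply (ex_series_scal_l (K:=R_AbsRing) (V:=R_NormedModule) A (fun n => q ^ n)).
      apply ex_series_geom. rewrite Rabs_right; lra. }
  assert (Hl : is_lim_seq (sum_n a) (Series a)) by exact (Series_correct a Ex).
  assert (Hu := is_lim_seq_abs _ _ (is_lim_seq_minus' _ _ _ _ Hl (is_lim_seq_const (sum_n a N)))).
  assert (Ev : eventually (fun M => Rabs (sum_n a M - sum_n a N) <= A * q ^ (S N) / (1 - q))).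
  2:{ exact (is_lim_seq_le_loc _ _ _ _ Ev Hu (is_lim_seq_const (A * q ^ (S N) / (1 - q)))). }
  exists N. intros M HM. replace M with (N + (M - N))%nat by lia.
  eapply Rle_trans; [apply (partial_diff a A q N (M - N) Hq Ha)|].
  unfold Rdiv. apply Rmult_le_compat_r. left; apply Rinv_0_lt_compat; lra.
  apply Rmult_le_compat_l; [exact HA|]. assert (0 <= q ^ S (N + (M - N))) by (apply pow_le; lra). lra.
Qed.


Definition clamp (y : R) := Rmax (-1) (Rmin 1 y).

Lemma clamp_in y : -1 <= clamp y <= 1.
Proof. unfold clamp, Rmax, Rmin. repeat destruct Rle_dec; lra. Qed.

Lemma clamp_id y : -1 <= y <= 1 -> clamp y = y.
Proof. intro. unfold clamp, Rmax, Rmin. repeat destruct Rle_dec; lra. Qed.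

Lemma sum_ext' (a b : nat -> R) N : (forall k, a k = b k) -> sum_n a N = sum_n b N.
Proof. intro H. induction N. rewrite !sum0; apply H. rewrite !sumS, IHN, H. reflexivity. Qed.

Lemma sum_mult_r (a : nat -> R) c N : sum_n a N * c = sum_n (fun k => a k * c) N.
Proof. induction N. rewrite !sum0; ring. rewrite !sumS, <- IHN. ring. Qed.

Lemma is_RInt_sum (F : nat -> R -> R) (v : nat -> R) a b N :
  (forall k, is_RInt (F k) a b (v k)) ->
  is_RInt (fun x => sum_n (fun k => F k x) N) a b (sum_n v N).
Proof.
  intro H. induction N.
  - apply (is_RInt_ext (F 0%nat)). intros; rewrite sum0; reflexivity. rewrite sum0. apply H.
  - assert (P := is_RInt_plus (V:=R_NormedModule) _ _ _ _ _ _ IHN (H (S N))).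
    apply (is_RInt_ext _ _ _ _ _ (fun x _ => eq_sym (sumS (fun k => F k x) N))).
    apply (RIval _ _ _ _ _ P). rewrite sumS. reflexivity.
Qed.

Lemma a0_lim s Ce q m n : 0 <= q < 1 -> 0 <= Ce ->
  (forall k, Rabs (s k) <= Ce * q ^ k) -> (2 <= m)%nat -> (2 <= n)%nat ->
  is_lim_seq (fun N => sum_n (fun k => s k * RInt (fun y => L k y * E m n y) (-1) 1) N) (a0 s m n).
Proof.
  intros Hq HCe Hs Hm Hn.
  set (c := fun k => RInt (fun y => L k y * E m n y) (-1) 1).
  set (f := fun N x => sum_n (fun k => s k * L k (clamp x)) N * E m n (clamp x)).
  set (g := fun x => legendre_series s (clamp x) * E m n (clamp x)).
  set (h := fun N => sum_n (fun k => s k * c k) N).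
  assert (Hf : forall N, is_RInt (f N) (-1) 1 (h N)).
  { intro N. apply (is_RInt_ext (fun x => sum_n (fun k => s k * (L k x * E m n x)) N)).
    { intros x Hx. unfold f. rewrite clamp_id.
      2:{ unfold Rmin, Rmax in Hx; destruct Rle_dec; lra. }
      rewrite sum_mult_r. apply sum_ext'. intro; ring. }
    apply is_RInt_sum. intro k.
    apply (is_RInt_ext (fun x => scal (s k) (L k x * E m n x))). intros; reflexivity.
    apply (is_RInt_scal (V:=R_NormedModule)). apply (RInt_correct (V:=R_CompleteNormedModule)). apply ck_ex. }
  assert (Hconv : filterlim f eventually (locally (T := fct_UniformSpace R R_CompleteNormedModule) g)).
  { intros P [eps HP].
    assert (Hy : 0 < eps * (1 - q) / (Ce + 1)).
    { apply Rdiv_lt_0_compat; [apply Rmult_lt_0_compat; [apply cond_pos|lra]|lra]. }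
    destruct (pow_lt_1_zero q ltac:(rewrite Rabs_right; lra) _ Hy) as [N0 HN0].
    exists N0. intros N HN. apply HP. intro t.
    change (Rabs (f N t - g t) < eps).
    unfold f, g.
    set (y := clamp t). assert (Hyi := clamp_in t). fold y in Hyi.
    replace (sum_n (fun k => s k * L k y) N * E m n y - legendre_series s y * E m n y)
      with ((sum_n (fun k => s k * L k y) N - legendre_series s y) * E m n y) by ring.
    rewrite Rabs_mult.
    assert (HE : Rabs (E m n y) <= 1).
    { unfold E. rewrite Rabs_mult.
      assert (B := eta_bound m y Hm Hyi). assert (C := eta_bound n y Hn Hyi).
      assert (0 <= Rabs (bs_eta m y)) by apply Rabs_pos.
      assert (0 <= Rabs (bs_eta n y)) by apply Rabs_pos. nra. }
    assert (HT : Rabs (sum_n (fun k => s k * L k y) N - legendre_series s y) <= Ce * q ^ (S N) / (1 - q)).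
    { rewrite Rabs_minus_sym. unfold legendre_series. apply series_tail; [exact Hq|exact HCe|].
      intro k. rewrite Rabs_mult. assert (Lb := Lbound k y Hyi).
      assert (0 <= Rabs (s k)) by apply Rabs_pos.
      assert (Hsk := Hs k). nra. }
    assert (Hp := HN0 (S N) ltac:(lia)). rewrite Rabs_right in Hp by (apply Rle_ge, pow_le; lra).
    assert (Hqn : 0 <= q ^ S N) by (apply pow_le; lra).
    assert (Hb : Ce * q ^ S N / (1 - q) < eps).
    { apply (Rmult_lt_reg_r (1 - q)); [lra|]. unfold Rdiv. rewrite Rmult_assoc, Rinv_l by lra.
      rewrite Rmult_1_r.
      assert (Hp2 : q ^ S N * (Ce + 1) < eps * (1 - q)).
      { apply (Rmult_lt_reg_r (/ (Ce + 1))). apply Rinv_0_lt_compat; lra.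
        rewrite Rmult_assoc, Rinv_r, Rmult_1_r by lra. exact Hp. }
      nra. }
    assert (0 <= Rabs (sum_n (fun k => s k * L k y) N - legendre_series s y)) by apply Rabs_pos.
    assert (0 <= Rabs (E m n y)) by apply Rabs_pos.
    nra. }
  destruct (filterlim_RInt (V:=R_CompleteNormedModule) f (-1) 1 eventually _ g h Hf Hconv) as [l [Hl Hg]].
  assert (Ha : a0 s m n = l).
  { unfold a0. rewrite <- (is_RInt_unique _ _ _ _ Hg). apply (RInt_ext (V:=R_CompleteNormedModule)).
    intros x Hx. unfold g. rewrite clamp_id.
    2:{ unfold Rmin, Rmax in Hx; destruct Rle_dec; lra. }
    unfold E. match goal with |- ?a = ?b => change (a = b :> R) end. ring. }
  rewrite Ha. exact Hl.
Qed.


Theorem mainTheorem3 :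
  forall (eta C_eta : R), 0 < eta -> 0 < C_eta ->
  exists C : R, 0 < C /\
    forall s : nat -> R,
      (forall k : nat, Rabs (s k) <= C_eta * exp (- eta * INR k)) ->
      forall m n : nat, (2 <= m)%nat -> (2 <= n)%nat ->
        Rabs (a0 s m n) <= C * exp (- eta * Rabs (INR n - INR m)).
Proof.
  intros eta Ce Heta HCe.
  set (q := exp (- eta)).
  assert (Hq0 : 0 < q) by apply exp_pos.
  assert (Hq1 : q < 1) by (unfold q; rewrite <- exp_0; apply exp_increasing; lra).
  assert (Hq2 : 0 < q ^ 2) by (apply pow_lt; lra).
  exists (2 * Ce / ((1 - q) * q ^ 2)). split.
  { apply Rdiv_lt_0_compat; [lra|]. apply Rmult_lt_0_compat; lra. }
  intros s Hs m n Hm Hn.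
  assert (Hs' : forall k, Rabs (s k) <= Ce * q ^ k).
  { intro k. unfold q. rewrite <- exp_pow. apply Hs. }
  set (d := (n - m + (m - n))%nat).
  assert (Hd : Rabs (INR n - INR m) = INR d).
  { unfold d. destruct (Nat.le_ge_cases m n) as [H|H].
    - replace (m - n)%nat with 0%nat by lia. rewrite Nat.add_0_r, minus_INR by exact H.
      rewrite Rabs_right; [reflexivity|]. apply Rle_ge. assert (INR m <= INR n) by (apply le_INR; exact H). lra.
    - replace (n - m)%nat with 0%nat by lia. rewrite Nat.add_0_l, minus_INR by exact H.
      rewrite Rabs_left1; [ring|]. assert (INR n <= INR m) by (apply le_INR; exact H). lra. }
  rewrite Hd, exp_pow. fold q.
  set (K := (d - 2)%nat).
  set (c := fun k => RInt (fun y => L k y * E m n y) (-1) 1).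
  assert (Hc0 : forall k, (k < K)%nat -> s k * c k = 0).
  { intros k Hk. unfold c. rewrite (is_RInt_unique _ _ _ _ (ck_zero k m n Hm Hn ltac:(unfold K, d in Hk; lia))).
    ring. }
  assert (Hc : forall k, Rabs (s k * c k) <= (2 * Ce) * q ^ k).
  { intro k. rewrite Rabs_mult. assert (A := Hs' k). assert (B := ck_bound k m n Hm Hn).
    fold (c k) in B. assert (0 <= Rabs (c k)) by apply Rabs_pos.
    assert (0 <= q ^ k) by (apply pow_le; lra).
    assert (0 <= Rabs (s k)) by apply Rabs_pos. nra. }
  assert (HB : forall N, Rabs (sum_n (fun k => s k * c k) N) <= 2 * Ce * q ^ K / (1 - q)).
  { intro N. apply (sum_zero_tail _ (2 * Ce) q K); try lra. exact Hc. exact Hc0. }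
  assert (Hlim := a0_lim s Ce q m n ltac:(lra) ltac:(lra) Hs' Hm Hn).
  fold c in Hlim.
  assert (Hle := is_lim_seq_le _ _ _ _ HB (is_lim_seq_abs _ _ Hlim) (is_lim_seq_const (2 * Ce * q ^ K / (1 - q)))).
  simpl in Hle.
  eapply Rle_trans; [exact Hle|].
  assert (HK : q ^ d >= q ^ K * q ^ 2).
  { rewrite <- pow_add. apply Rle_ge.
    replace (K + 2)%nat with (d + (K + 2 - d))%nat by (unfold K; lia). rewrite pow_add.
    assert (H1 : q ^ (K + 2 - d) <= 1 ^ (K + 2 - d)) by (apply pow_incr; lra).
    rewrite pow1 in H1. assert (0 <= q ^ d) by (apply pow_le; lra). nra. }
  assert (Hdq : 0 <= q ^ d) by (apply pow_le; lra).
  apply (Rmult_le_reg_r ((1 - q) * q ^ 2)). apply Rmult_lt_0_compat; lra.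
  replace (2 * Ce * q ^ K / (1 - q) * ((1 - q) * q ^ 2)) with (2 * Ce * (q ^ K * q ^ 2)) by (field; lra).
  replace (2 * Ce / ((1 - q) * q ^ 2) * q ^ d * ((1 - q) * q ^ 2)) with (2 * Ce * q ^ d) by (field; lra).
  apply Rmult_le_compat_l; lra.
Qed.
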